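(* Let $(X,d,\alpha)$ be a computable metric space. Suppose $A$, $B$ and $S$ are subsets of $X$ such that $A\subseteq S$ and $B\subseteq S$ and such that $A$ and $B$ are computable up to $S$. Then $A\cup B$ is computable up to $S$.
   Context: A computable metric space is a triple $(X,d,\alpha)$ where $(X,d)$ is a metric space and $\alpha=(\alpha_i)_{i\in\mathbb N}$ is a sequence with dense range in $(X,d)$ such that $(i,j)\mapsto d(\alpha_i,\alpha_j)$ is a computable function $\mathbb N^2\to\mathbb R$. Fix computable $\sigma:\mathbb N^2\to\mathbb N$, $\eta:\mathbb N\to\mathbb N$ such that $\{(\sigma(j,0),\dots,\sigma(j,\eta(j))):j\in\mathbb N\}$ is the set of all nonempty finite sequences in $\mathbb N$; let $[j]=\{\sigma(j,i):0\le i\le\eta(j)\}$ and $\Lambda_j=\{\alpha_i:i\in[j]\}$. For $A,B\subseteq X$ and $\varepsilon>0$ write $A\prec_\varepsilon B$ if for each $a\in A$ there is $b\in B$ with $d(a,b)<\varepsilon$. For $A\subseteq S\subseteq X$, $A$ is computable up to $S$ if there is a computable $f:\mathbb N\to\mathbb N$ with $A\prec_{2^{-k}}\Lambda_{f(k)}$ and $\Lambda_{f(k)}\prec_{2^{-k}}S$ for all $k\in\mathbb N$. *)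

(* Defs.v *)
From Stdlib Require Import Reals List.
Import ListNotations.
Open Scope R_scope.

(** Projection [Proj i] returns the i-th argument (0 if absent).
    [PrimRec f g] recurses on the FIRST argument:
      PR(0, xs) = f xs,  PR(n+1, xs) = g (n :: PR(n,xs) :: xs).
    [Min f] xs = least y with f (y :: xs) = 0, all f (z :: xs) (z<y) defined
    and nonzero. *)
Inductive rterm : Type :=
| Zer : rterm
| Suc : rterm
| Proj : nat -> rterm
| Comp : rterm -> list rterm -> rterm
| PrimRec : rterm -> rterm -> rterm
| Min : rterm -> rterm.

Inductive reval : rterm -> list nat -> nat -> Prop :=
| ev_zer xs : reval Zer xs 0
| ev_suc x xs : reval Suc (x :: xs) (S x)
| ev_proj i xs : reval (Proj i) xs (nth i xs 0%nat)
| ev_comp f gs xs ys y :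
    revals gs xs ys -> reval f ys y -> reval (Comp f gs) xs y
| ev_pr0 f g xs y : reval f xs y -> reval (PrimRec f g) (0%nat :: xs) y
| ev_prS f g n xs r y :
    reval (PrimRec f g) (n :: xs) r -> reval g (n :: r :: xs) y ->
    reval (PrimRec f g) (S n :: xs) y
| ev_min f xs y :
    reval f (y :: xs) 0%nat ->
    (forall z, (z < y)%nat -> exists v, reval f (z :: xs) v /\ v <> 0%nat) ->
    reval (Min f) xs y
with revals : list rterm -> list nat -> list nat -> Prop :=
| evs_nil xs : revals [] xs []
| evs_cons g gs xs y ys :
    reval g xs y -> revals gs xs ys -> revals (g :: gs) xs (y :: ys).

Definition computable1 (f : nat -> nat) : Prop :=
  exists t, forall n, reval t [n] (f n).
Definition computable2 (f : nat -> nat -> nat) : Prop :=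
  exists t, forall m n, reval t [m; n] (f m n).
Definition computable3 (f : nat -> nat -> nat -> nat) : Prop :=
  exists t, forall m n k, reval t [m; n; k] (f m n k).

Definition computable_R2 (f : nat -> nat -> R) : Prop :=
  exists a b c : nat -> nat -> nat -> nat,
    computable3 a /\ computable3 b /\ computable3 c /\
    forall i j k,
      Rabs (f i j - (INR (a i j k) - INR (b i j k)) / INR (S (c i j k)))
        < / 2 ^ k.

Definition is_metric {X : Type} (d : X -> X -> R) : Prop :=
  (forall x y, 0 <= d x y) /\
  (forall x y, d x y = 0 <-> x = y) /\
  (forall x y, d x y = d y x) /\
  (forall x y z, d x z <= d x y + d y z).

Definition dense_seq {X : Type} (d : X -> X -> R) (alpha : nat -> X) : Prop :=
  forall x eps, 0 < eps -> exists i, d x (alpha i) < eps.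

Definition computable_metric_space {X : Type} (d : X -> X -> R)
  (alpha : nat -> X) : Prop :=
  is_metric d /\ dense_seq d alpha /\
  computable_R2 (fun i j => d (alpha i) (alpha j)).

Definition seq_of (sigma : nat -> nat -> nat) (eta : nat -> nat) (j : nat)
  : list nat := map (sigma j) (seq 0 (S (eta j))).

Definition finseq_enum (sigma : nat -> nat -> nat) (eta : nat -> nat) : Prop :=
  computable2 sigma /\ computable1 eta /\
  (forall s : list nat, s <> [] <-> exists j, s = seq_of sigma eta j).

Definition Lambda {X : Type} (alpha : nat -> X) (sigma : nat -> nat -> nat)
  (eta : nat -> nat) (j : nat) : X -> Prop :=
  fun x => exists i, (i <= eta j)%nat /\ x = alpha (sigma j i).

Definition prec_eps {X : Type} (d : X -> X -> R) (A B : X -> Prop) (eps : R)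
  : Prop := forall a, A a -> exists b, B b /\ d a b < eps.

Definition subset {X : Type} (A B : X -> Prop) : Prop := forall x, A x -> B x.

Definition computable_up_to {X : Type} (d : X -> X -> R) (alpha : nat -> X)
  (sigma : nat -> nat -> nat) (eta : nat -> nat) (A S : X -> Prop) : Prop :=
  exists f : nat -> nat, computable1 f /\
    forall k : nat,
      prec_eps d A (Lambda alpha sigma eta (f k)) (/ 2 ^ k) /\
      prec_eps d (Lambda alpha sigma eta (f k)) S (/ 2 ^ k).

(* Main.v *)
Require Import Defs.
From Stdlib Require Import Reals List Lia Arith ClassicalEpsilon.
Import ListNotations.
Module Aux.
Open Scope nat_scope.

Lemma proj_ok i xs v : nth i xs 0%nat = v -> reval (Proj i) xs v.
Proof. intros <-; constructor. Qed.
Lemma c0 f xs y : reval f [] y -> reval (Comp f []) xs y.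
Proof. intros; eapply ev_comp; [constructor|eauto]. Qed.
Lemma c1 f g1 xs a y : reval g1 xs a -> reval f [a] y -> reval (Comp f [g1]) xs y.
Proof. intros; eapply ev_comp; [repeat (constructor; eauto)|eauto]. Qed.
Lemma c2 f g1 g2 xs a b y : reval g1 xs a -> reval g2 xs b -> reval f [a;b] y -> reval (Comp f [g1;g2]) xs y.
Proof. intros; eapply ev_comp; [repeat (constructor; eauto)|eauto]. Qed.
Lemma c3 f g1 g2 g3 xs a b c y : reval g1 xs a -> reval g2 xs b -> reval g3 xs c -> reval f [a;b;c] y -> reval (Comp f [g1;g2;g3]) xs y.
Proof. intros; eapply ev_comp; [repeat (constructor; eauto)|eauto]. Qed.

Lemma zer_ok xs : reval (Comp Zer []) xs 0.
Proof. apply c0; constructor. Qed.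
Lemma suc_ok n : reval Suc [n] (S n).
Proof. constructor. Qed.

Definition addT := PrimRec (Proj 0) (Comp Suc [Proj 1]).
Lemma addT_ok m n : reval addT [m;n] (m + n).
Proof. induction m; simpl.
 - apply ev_pr0. now apply proj_ok.
 - eapply ev_prS; [exact IHm|]. eapply c1; [apply proj_ok; reflexivity| constructor]. Qed.

Definition predT := PrimRec (Comp Zer []) (Proj 0).
Lemma predT_ok n : reval predT [n] (Nat.pred n).
Proof. induction n; simpl.
 - apply ev_pr0. apply zer_ok.
 - eapply ev_prS; [exact IHn|]. now apply proj_ok. Qed.

Definition monT := PrimRec (Proj 0) (Comp predT [Proj 1]).
Lemma monT_ok m n : reval monT [m;n] (n - m).
Proof. induction m; simpl.
 - apply ev_pr0. apply proj_ok; simpl; lia.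
 - eapply ev_prS; [exact IHm|]. eapply c1; [apply proj_ok; reflexivity|].
   replace (n - S m) with (Nat.pred (n - m)) by lia. apply predT_ok. Qed.

Definition ndist (m n : nat) := ((n - m) + (m - n))%nat.
Definition distT := Comp addT [Comp monT [Proj 0; Proj 1]; Comp monT [Proj 1; Proj 0]].
Lemma distT_ok m n : reval distT [m;n] (ndist m n).
Proof. unfold distT, ndist. eapply c2; [ | | apply addT_ok].
 - eapply c2; [apply proj_ok; reflexivity|apply proj_ok; reflexivity|apply monT_ok].
 - eapply c2; [apply proj_ok; reflexivity|apply proj_ok; reflexivity|apply monT_ok]. Qed.

Fixpoint sumf (F : nat -> nat) (n : nat) : nat :=
  match n with 0 => 0 | S n => (sumf F n + F n)%nat end.

Definition sumT F := PrimRec (Comp Zer []) (Comp addT [Proj 1; Comp F [Proj 0; Proj 2; Proj 3]]).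
Lemma sumT_ok F (Fs : nat -> nat -> nat -> nat) :
  (forall i j k, reval F [i;j;k] (Fs i j k)) ->
  forall n j k, reval (sumT F) [n;j;k] (sumf (fun i => Fs i j k) n).
Proof. intros HF n j k; induction n; simpl.
 - apply ev_pr0. apply zer_ok.
 - eapply ev_prS; [exact IHn|]. eapply c2; [apply proj_ok; reflexivity| |apply addT_ok].
   eapply c3; [apply proj_ok; reflexivity|apply proj_ok; reflexivity|apply proj_ok; reflexivity|apply HF]. Qed.

Lemma sumf_zero F n : sumf F n = 0%nat -> forall i, (i < n)%nat -> F i = 0%nat.
Proof. induction n; simpl; intros H i Hi; [lia|].
 destruct (Nat.eq_dec i n); [subst; lia|]. apply IHn; lia. Qed.
Lemma sumf_ext_zero F n : (forall i, (i < n)%nat -> F i = 0%nat) -> sumf F n = 0%nat.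
Proof. induction n; simpl; intros H; [auto|]. rewrite IHn, H; auto. Qed.

Lemma least_ex (P : nat -> Prop) (Pd : forall n, {P n} + {~ P n}) n :
  P n -> exists m, P m /\ forall z, (z < m)%nat -> ~ P z.
Proof.
  revert n. induction n as [n IH] using (well_founded_induction lt_wf). intros Pn.
  destruct (Classical_Prop.classic (exists z, (z < n)%nat /\ P z)) as [[z [Hz Pz]]|Hn].
  - exact (IH z Hz Pz).
  - exists n; split; auto. intros z Hz Pz; apply Hn; eauto.
Qed.
Close Scope R_scope.

Definition F1T ts tf := Comp distT [Comp ts [Proj 1; Proj 0]; Comp ts [Comp tf [Proj 2]; Proj 0]].
Definition F2T ts te tf tg := Comp distT [Comp ts [Proj 1; Comp Suc [Comp addT [Comp te [Comp tf [Proj 2]]; Proj 0]]];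
   Comp ts [Comp tg [Proj 2]; Proj 0]].
Definition DT ts te tf tg :=
  let EA := Comp te [Comp tf [Proj 1]] in let EB := Comp te [Comp tg [Proj 1]] in
  Comp addT [Comp distT [Comp te [Proj 0]; Comp Suc [Comp addT [EA; EB]]];
             Comp addT [Comp (sumT (F1T ts tf)) [Comp Suc [EA]; Proj 0; Proj 1];
                        Comp (sumT (F2T ts te tf tg)) [Comp Suc [EB]; Proj 0; Proj 1]]].

Definition Ds (sigma : nat -> nat -> nat) (eta f g : nat -> nat) (j k : nat) : nat :=
  ndist (eta j) (S (eta (f k) + eta (g k))) +
  (sumf (fun i => ndist (sigma j i) (sigma (f k) i)) (S (eta (f k))) +
   sumf (fun i => ndist (sigma j (S (eta (f k) + i))) (sigma (g k) i)) (S (eta (g k)))).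

Lemma DT_ok ts te tf tg sigma eta f g :
  (forall m n, reval ts [m;n] (sigma m n)) -> (forall n, reval te [n] (eta n)) ->
  (forall n, reval tf [n] (f n)) -> (forall n, reval tg [n] (g n)) ->
  forall j k, reval (DT ts te tf tg) [j;k] (Ds sigma eta f g j k).
Proof.
  intros Hs He Hf Hg j k. unfold DT, Ds.
  assert (EA : forall xs, nth 1 xs 0 = k -> reval (Comp te [Comp tf [Proj 1]]) xs (eta (f k))).
  { intros xs Hx. eapply c1; [eapply c1; [apply proj_ok; exact Hx|apply Hf]|apply He]. }
  assert (EB : forall xs, nth 1 xs 0 = k -> reval (Comp te [Comp tg [Proj 1]]) xs (eta (g k))).
  { intros xs Hx. eapply c1; [eapply c1; [apply proj_ok; exact Hx|apply Hg]|apply He]. }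
  eapply c2; [| |apply addT_ok].
  - eapply c2; [| |apply distT_ok].
    + eapply c1; [apply proj_ok; reflexivity|apply He].
    + eapply c1; [|apply suc_ok]. eapply c2; [apply EA; reflexivity|apply EB; reflexivity|apply addT_ok].
  - eapply c2; [| |apply addT_ok].
    + eapply c3; [eapply c1; [apply EA; reflexivity|apply suc_ok]|apply proj_ok; reflexivity|apply proj_ok; reflexivity|].
      apply (sumT_ok _ (fun i j k => ndist (sigma j i) (sigma (f k) i))).
      intros i j' k'. unfold F1T. eapply c2; [| |apply distT_ok].
      * eapply c2; [apply proj_ok; reflexivity|apply proj_ok; reflexivity|apply Hs].
      * eapply c2; [eapply c1; [apply proj_ok; reflexivity|apply Hf]|apply proj_ok; reflexivity|apply Hs].
    + eapply c3; [eapply c1; [apply EB; reflexivity|apply suc_ok]|apply proj_ok; reflexivity|apply proj_ok; reflexivity|].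
      apply (sumT_ok _ (fun i j k => ndist (sigma j (S (eta (f k) + i))) (sigma (g k) i))).
      intros i j' k'. unfold F2T. eapply c2; [| |apply distT_ok].
      * eapply c2; [apply proj_ok; reflexivity| |apply Hs].
        eapply c1; [|apply suc_ok]. eapply c2; [|apply proj_ok; reflexivity|apply addT_ok].
        eapply c1; [eapply c1; [apply proj_ok; reflexivity|apply Hf]|apply He].
      * eapply c2; [eapply c1; [apply proj_ok; reflexivity|apply Hg]|apply proj_ok; reflexivity|apply Hs].
Qed.

Lemma seq_of_len sigma eta j : length (seq_of sigma eta j) = S (eta j).
Proof. unfold seq_of. now rewrite length_map, length_seq. Qed.
Lemma seq_of_nth sigma eta j i : i <= eta j -> nth i (seq_of sigma eta j) 0 = sigma j i.
Proof. intros H. unfold seq_of. rewrite nth_indep with (d' := sigma j 0) by (rewrite length_map, length_seq; lia).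
  rewrite map_nth, seq_nth by lia. reflexivity. Qed.

Lemma Ds_zero_ex sigma eta f g k : finseq_enum sigma eta -> exists j, Ds sigma eta f g j k = 0.
Proof.
  intros [_ [_ Hfs]].
  destruct (proj1 (Hfs (seq_of sigma eta (f k) ++ seq_of sigma eta (g k)))) as [j Hj].
  { unfold seq_of; simpl; discriminate. }
  exists j. unfold Ds.
  assert (Hl : eta j = S (eta (f k) + eta (g k))).
  { apply (f_equal (@length nat)) in Hj. rewrite length_app, !seq_of_len in Hj. lia. }
  rewrite Hl. unfold ndist at 1. rewrite Nat.sub_diag.
  rewrite !sumf_ext_zero; [reflexivity| |]; intros i Hi; unfold ndist; simpl in Hi.
  - assert (sigma j (S (eta (f k) + i)) = sigma (g k) i).
    { rewrite <- seq_of_nth with (eta := eta) by lia. rewrite <- Hj.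
      rewrite app_nth2 by (rewrite seq_of_len; lia). rewrite seq_of_len.
      replace (S (eta (f k) + i) - S (eta (f k))) with i by lia. apply seq_of_nth; lia. }
    rewrite H; lia.
  - assert (sigma j i = sigma (f k) i).
    { rewrite <- seq_of_nth with (eta := eta) by lia. rewrite <- Hj.
      rewrite app_nth1 by (rewrite seq_of_len; lia). apply seq_of_nth; lia. }
    rewrite H; lia.
Qed.

Lemma Ds_zero_props sigma eta f g j k : Ds sigma eta f g j k = 0 ->
  eta j = S (eta (f k) + eta (g k)) /\
  (forall i, i <= eta (f k) -> sigma j i = sigma (f k) i) /\
  (forall i, i <= eta (g k) -> sigma j (S (eta (f k) + i)) = sigma (g k) i).
Proof.
  unfold Ds. intros H. split; [unfold ndist in H; lia|]. split; intros i Hi.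
  - assert (H1 : sumf (fun i => ndist (sigma j i) (sigma (f k) i)) (S (eta (f k))) = 0) by lia.
    pose proof (sumf_zero _ _ H1 i ltac:(lia)). cbv beta in H0. unfold ndist in H0; lia.
  - assert (H1 : sumf (fun i => ndist (sigma j (S (eta (f k) + i))) (sigma (g k) i)) (S (eta (g k))) = 0) by lia.
    pose proof (sumf_zero _ _ H1 i ltac:(lia)). cbv beta in H0. unfold ndist in H0; lia.
Qed.
End Aux.
Import Aux.
Close Scope nat_scope.
Open Scope R_scope.

Theorem proposition4p1 (X : Type) (d : X -> X -> R) (alpha : nat -> X)
  (sigma : nat -> nat -> nat) (eta : nat -> nat)
  (A B S : X -> Prop) :
  computable_metric_space d alpha ->
  finseq_enum sigma eta ->
  subset A S -> subset B S ->
  computable_up_to d alpha sigma eta A S ->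
  computable_up_to d alpha sigma eta B S ->
  computable_up_to d alpha sigma eta (fun x => A x \/ B x) S.
Proof.
  intros _ FE _ _ [f [[tf Hf] Hfk]] [g [[tg Hg] Hgk]].
  pose proof FE as [[ts Hs] [[te He] _]].
  assert (H : forall k, exists y, reval (Min (DT ts te tf tg)) [k] y /\ Ds sigma eta f g y k = 0%nat).
  { intros k. destruct (Ds_zero_ex sigma eta f g k FE) as [j Hj].
    destruct (least_ex (fun y => Ds sigma eta f g y k = 0%nat) (fun n => Nat.eq_dec _ _) j Hj) as [y [Hy Hl]].
    exists y; split; auto. constructor.
    - rewrite <- Hy. apply DT_ok; auto.
    - intros z Hz. exists (Ds sigma eta f g z k). split; [apply DT_ok; auto|]. apply Hl; auto. }
  exists (fun k => proj1_sig (constructive_indefinite_description _ (H k))).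
  split.
  { exists (Min (DT ts te tf tg)). intros n.
    exact (proj1 (proj2_sig (constructive_indefinite_description _ (H n)))). }
  intros k.
  pose proof (proj2 (proj2_sig (constructive_indefinite_description _ (H k)))) as Hy.
  set (y := proj1_sig (constructive_indefinite_description _ (H k))) in *; clearbody y.
  destruct (Ds_zero_props _ _ _ _ _ _ Hy) as [E1 [E2 E3]].
  destruct (Hfk k) as [Fa Fb]. destruct (Hgk k) as [Ga Gb].
  split.
  - intros a [Ha|Ha].
    + destruct (Fa a Ha) as [b [[i [Hi ->]] Hd]].
      exists (alpha (sigma (f k) i)); split; auto.
      exists i; split; [lia|]. rewrite E2; auto.
    + destruct (Ga a Ha) as [b [[i [Hi ->]] Hd]].
      exists (alpha (sigma (g k) i)); split; auto.
      exists (Datatypes.S (eta (f k) + i))%nat; split; [lia|]. rewrite E3; auto.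
  - intros a [i [Hi ->]].
    destruct (le_lt_dec i (eta (f k))) as [Hle|Hlt].
    + rewrite E2 by auto. apply Fb. exists i; auto.
    + replace i with (Datatypes.S (eta (f k) + (i - Datatypes.S (eta (f k)))))%nat by lia.
      rewrite E3 by lia. apply Gb. exists (i - Datatypes.S (eta (f k)))%nat; split; [lia|auto].
Qed.
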